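(* Let $G$ be the Delaunay graph of a unit intensity Poisson process on $\mathbb{R}^2$, with edges drawn as straight segments between their endpoints, and let $\rho,\ell>0$. The probability that $G$ has an edge of length at least $\ell$ which intersects the square $Q(0,\rho)$ is at most $\left(\frac{\sqrt{32}\,\rho}{\ell}+8\right)^2 e^{-\ell^2/32}$.
   Context: $Q(x,R)=x+[-R,R]^2$. The Voronoi cell of $x\in V$ is $C(x)=\{z: d(z,x)=d(z,V)\}$; the Delaunay graph has vertex set $V$ and an edge $(x,y)$ iff $|C(x)\cap C(y)|>1$. *)

(* Defs.v *)
From HB Require Import structures.
From mathcomp Require Import all_boot all_order all_algebra.
From mathcomp Require Import finmap.
From mathcomp Require Import all_classical all_reals all_analysis.
Import Order.TTheory GRing.Theory Num.Theory.

Set Implicit Arguments.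
Unset Strict Implicit.
Unset Printing Implicit Defensive.

Local Open Scope classical_set_scope.
Local Open Scope ring_scope.

Section Defs.
Variable R : realType.

Definition area : set (R * R) -> \bar R :=
  ((@lebesgue_measure R) \x (@lebesgue_measure R))%E.

Definition square (x : R * R) (r : R) : set (R * R) :=
  [set z | `|z.1 - x.1| <= r /\ `|z.2 - x.2| <= r].

Definition bounded2 (A : set (R * R)) : Prop :=
  exists r : R, A `<=` square (0, 0) r.

Definition npts (S : set (R * R)) : \bar R :=
  if pselect (finite_set S) is left _ then ((#|` fset_set S|)%:R)%:E
  else +oo%E.

Definition poisson_pmf (m : R) (k : nat) : R :=
  expR (- m) * m ^+ k / (k`!)%:R.

Definition dist2 (a b : R * R) : R :=
  Num.sqrt ((a.1 - b.1) ^+ 2 + (a.2 - b.2) ^+ 2).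

Definition dist_set (z : R * R) (V : set (R * R)) : R :=
  inf [set dist2 z v | v in V].

Definition voronoi (V : set (R * R)) (x : R * R) : set (R * R) :=
  [set z | dist2 z x = dist_set z V].

Definition delaunay_edge (V : set (R * R)) (x y : R * R) : Prop :=
  V x /\ V y /\ x <> y /\
  exists z1 z2, z1 <> z2 /\
    (voronoi V x `&` voronoi V y) z1 /\ (voronoi V x `&` voronoi V y) z2.

Definition segment (x y : R * R) : set (R * R) :=
  [set (x.1 + t * (y.1 - x.1), x.2 + t * (y.2 - x.2)) | t in `[0, 1]].

End Defs.

Definition unit_poisson_process (R : realType) (d : measure_display)
  (Omega : measurableType d) (P : probability Omega R)
  (X : Omega -> set (R * R)) : Prop :=
  (forall A : set (R * R), measurable A -> bounded2 A ->
     forall k : nat, measurable [set w | npts (X w `&` A) = (k%:R)%:E]) /\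
  (forall (n : nat) (A : 'I_n -> set (R * R)) (k : 'I_n -> nat),
     (forall i, measurable (A i) /\ bounded2 (A i)) ->
     (forall i j, i != j -> A i `&` A j = set0) ->
     P (\bigcap_(i in [set: 'I_n]) [set w | npts (X w `&` A i) = ((k i)%:R)%:E])
     = (\prod_(i < n) poisson_pmf (fine (area (A i))) (k i))%:E).

Definition long_edge_event (R : realType) (Omega : Type)
  (X : Omega -> set (R * R)) (rho ell : R) : set Omega :=
  [set w | exists x y : R * R, delaunay_edge (X w) x y /\ ell <= dist2 x y /\
     (segment x y `&` square (0, 0) rho) !=set0].

(* Main.v *)
Require Import Defs.
From HB Require Import structures.
From mathcomp Require Import all_boot all_order all_algebra.
From mathcomp Require Import all_classical all_reals all_analysis.
From mathcomp Require Import ring lra zify.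
Import Order.TTheory GRing.Theory Num.Theory.
Local Open Scope classical_set_scope.
Local Open Scope ring_scope.

Lemma cs2 (R : realType) (a1 a2 b1 b2 : R) : (a1*b1+a2*b2)^+2 <= (a1^+2+a2^+2)*(b1^+2+b2^+2).
Proof. have: 0 <= (a1*b2-a2*b1)^+2 by apply: sqr_ge0. nra. Qed.

Lemma sq_le (R : realType) (a b : R) : 0 <= b -> a^+2 <= b^+2 -> a <= b.
Proof. move=> b0 h; rewrite leNgt; apply/negP => h1; nra. Qed.

Lemma sq_bound (R : realType) (a s : R) : 0 <= s -> a^+2 <= s^+2 -> -s <= a <= s.
Proof.
move=> s0 h; apply/andP; split; last exact: sq_le.
rewrite lerNl; apply: sq_le => //; by rewrite sqrrN.
Qed.

Lemma prod_le (R : realType) (a b A B : R) : -A <= a <= A -> -B <= b <= B -> a*b <= A*B.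
Proof. move=> /andP[h1 h2] /andP[h3 h4]; nra. Qed.

Lemma core (R : realType) (a1 a2 b1 b2 r M : R) : 0 < r -> 0 <= M ->
  a1^+2 + a2^+2 < r^+2 -> b1^+2+b2^+2 <= M^+2 ->
  (a1+b1)^+2 + (a2+b2)^+2 < (r+M)^+2.
Proof.
move=> r0 M0 ha hb.
have hc := @cs2 R a1 a2 b1 b2.
have hab : a1*b1+a2*b2 <= r*M.
  have h1 : (a1*b1+a2*b2)^+2 <= (r*M)^+2.
    apply: (le_trans hc). rewrite exprMn. apply: ler_pM => //; try nra.
  apply: sq_le h1; nra.
nra.
Qed.

Lemma gb (R : realType) (p d n tau t tau0 s ell rho : R) : `|p| <= rho ->
  -tau0 <= tau - t <= tau0 -> -s <= d <= s -> -1 <= n <= 1 -> tau0*s = ell/2 ->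
  0 < ell -> `|p + (tau - t)*d + ell/4*n| <= rho + 3*ell/4.
Proof.
move=> hp ht hd hn ts l0.
have h1 := @prod_le R _ _ _ _ ht hd.
have h2 : -(tau0*s) <= (tau - t)*d.
  have := @prod_le R (-(tau-t)) d tau0 s ltac:(move: ht => /andP[? ?]; apply/andP; split; lra) hd.
  lra.
move: hp hn; rewrite !ler_norml => /andP[? ?] /andP[? ?].
apply/andP; split; nra.
Qed.

Lemma gM (R : realType) (tau tau0 s ell : R) : tau0 <= tau -> tau <= 1 - tau0 -> tau0*s = ell/2 ->
  0 < s -> ell <= s -> 0 < ell -> (tau-1/2)^+2*s^+2 + ell^+2/16 <= (s/2-ell/4)^+2.
Proof.
move=> h1 h2 ts s0 ls l0.
have h3 : -(s/2 - ell/2) <= (tau - 1/2)*s <= s/2 - ell/2.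
  apply/andP; split; nra.
have h4 : ((tau - 1/2)*s)^+2 <= (s/2 - ell/2)^+2.
  move: h3 => /andP[h3 h4]; nra.
rewrite -exprMn; nra.
Qed.

Lemma gP (R : realType) (Ba sg s ell : R) : Ba^+2 < (s*(ell/4))^+2 -> sg^+2 = 1 ->
  0 < s -> 0 < ell -> 0 < sg*Ba + s*(ell/4).
Proof.
move=> h sg2 s0 l0.
have e : (sg * Ba)^+2 = Ba^+2 by rewrite exprMn sg2 mul1r.
have p : 0 < s * (ell/4) by apply: mulr_gt0 => //; lra.
rewrite -e in h; rewrite ltNge; apply/negP => h1; nra.
Qed.

Lemma geom (R : realType) (x1 x2 d1 d2 z1 z2 t rho ell : R) :
  0 < ell -> ell^+2 <= d1^+2 + d2^+2 ->
  (z1-x1)^+2 + (z2-x2)^+2 = (z1-(x1+d1))^+2 + (z2-(x2+d2))^+2 ->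
  0 <= t -> t <= 1 -> `|x1 + t*d1| <= rho -> `|x2 + t*d2| <= rho ->
  exists c1 c2 : R, `|c1| <= rho + 3*ell/4 /\ `|c2| <= rho + 3*ell/4 /\
    forall w1 w2, (w1-c1)^+2 + (w2-c2)^+2 < ell^+2/16 ->
      (z1-w1)^+2 + (z2-w2)^+2 < (z1-x1)^+2 + (z2-x2)^+2.
Proof.
move=> l0 hD hz t0 t1 hp1 hp2.
have l2 : 0 < ell^+2 by rewrite exprn_gt0.
have D0 : 0 < d1^+2 + d2^+2 by lra.
have [s [s0 ss]] : exists s, 0 < s /\ s^+2 = d1^+2 + d2^+2.
  exists (Num.sqrt (d1^+2 + d2^+2)); split; first by rewrite sqrtr_gt0.
  by rewrite sqr_sqrtr // ltW.
have ls : ell <= s by apply: sq_le; [apply: ltW | rewrite ss].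
have d1s : -s <= d1 <= s.
  by apply: sq_bound; [apply: ltW | rewrite ss; have := sqr_ge0 d2; lra].
have d2s : -s <= d2 <= s.
  by apply: sq_bound; [apply: ltW | rewrite ss; have := sqr_ge0 d1; lra].
have [tau0 tau0s] : exists tau0, tau0 * s = ell/2.
  exists (ell / (2*s)); field; apply/eqP; lra.
have tau00 : 0 < tau0.
  have : 0 < tau0 * s by rewrite tau0s; lra.
  by rewrite pmulr_lgt0.
have tau01 : tau0 <= 1/2.
  have : tau0 * s <= 1/2 * s by rewrite tau0s; lra.
  by rewrite ler_pM2r.
have [tau [taul tauu taut]] : exists tau, [/\ tau0 <= tau, tau <= 1 - tau0 & -tau0 <= tau - t <= tau0].
  clear -tau00 tau01 t0 t1.
  case: (ltP t tau0) => h1; first by exists tau0; split; lra.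
  case: (ltP (1 - tau0) t) => h2; first by exists (1 - tau0); split; lra.
  by exists t; split; lra.
have [sg [sg2 sgk]] : exists sg : R, sg^+2 = 1 /\ 0 <= sg * (-d2*(z1-(x1+d1/2)) + d1*(z2-(x2+d2/2))).
  case: (lerP 0 (-d2*(z1-(x1+d1/2)) + d1*(z2-(x2+d2/2)))) => h.
    by exists 1; rewrite expr1n mul1r.
  by exists (-1); rewrite sqrrN expr1n mulN1r lerNr oppr0 ltW.
have s00 : s != 0 by rewrite gt_eqF.
have [n1 [n2 [en1 en2]]] : exists n1 n2, n1 * s = - sg * d2 /\ n2 * s = sg * d1.
  by exists (- sg * d2 / s), (sg * d1 / s); split; field.
have nn : n1^+2 + n2^+2 = 1.
  have : (n1^+2 + n2^+2) * s^+2 = 1 * s^+2.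
    have -> : (n1^+2 + n2^+2) * s^+2 = (n1*s)^+2 + (n2*s)^+2 by ring.
    rewrite en1 en2 ss; have : sg^+2 * (d1^+2+d2^+2) = d1^+2+d2^+2 by rewrite sg2 mul1r.
    move=> <-; ring.
  have s20 : s^+2 != 0 by rewrite expf_neq0.
  exact: (mulIf s20).
have n1b : -1 <= n1 <= 1.
  by apply: sq_bound; rewrite ?expr1n //; have := sqr_ge0 n2; lra.
have n2b : -1 <= n2 <= 1.
  by apply: sq_bound; rewrite ?expr1n //; have := sqr_ge0 n1; lra.
have dn : d1*n1 + d2*n2 = 0.
  have : (d1*n1 + d2*n2) * s = 0 * s by rewrite mulrDl -!mulrA en1 en2; ring.
  exact: mulIf.
have Bn : (-d2*n1 + d1*n2) * s = sg * s^+2.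
  by rewrite mulrDl -!mulrA en1 en2 ss; ring.
exists (x1 + tau*d1 + ell/4*n1), (x2 + tau*d2 + ell/4*n2).
split.
  have -> : x1 + tau * d1 + ell / 4 * n1 = (x1 + t*d1) + (tau - t)*d1 + ell/4*n1 by ring.
  exact: (@gb R _ _ _ _ _ _ _ _ _ hp1 taut d1s n1b tau0s l0).
split.
  have -> : x2 + tau * d2 + ell / 4 * n2 = (x2 + t*d2) + (tau - t)*d2 + ell/4*n2 by ring.
  exact: (@gb R _ _ _ _ _ _ _ _ _ hp2 taut d2s n2b tau0s l0).
move=> w1 w2 hw.
have [a1 ea1] : exists a1, a1 = w1 - (x1 + tau * d1 + ell / 4 * n1) by eexists.
have [a2 ea2] : exists a2, a2 = w2 - (x2 + tau * d2 + ell / 4 * n2) by eexists.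
have [b1 eb1] : exists b1, b1 = (tau - 1/2) * d1 + ell/4 * n1 by eexists.
have [b2 eb2] : exists b2, b2 = (tau - 1/2) * d2 + ell/4 * n2 by eexists.
have [u1 eu1] : exists u1, u1 = z1 - (x1 + d1/2) by eexists.
have [u2 eu2] : exists u2, u2 = z2 - (x2 + d2/2) by eexists.
rewrite -ea1 -ea2 in hw.
rewrite -eu1 -eu2 in sgk.
have du : d1 * u1 + d2 * u2 = 0.
  have : (z1-x1)^+2 + (z2-x2)^+2 - ((z1-(x1+d1))^+2 + (z2-(x2+d2))^+2) = 2 * (d1 * u1 + d2 * u2).
    by rewrite eu1 eu2; field.
  rewrite hz subrr => /esym /eqP; rewrite mulf_eq0 pnatr_eq0 /= => /eqP //.
have hb : b1^+2 + b2^+2 = (tau - 1/2)^+2 * s^+2 + ell^+2/16.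
  have -> : b1^+2 + b2^+2 = (tau - 1/2)^+2 * (d1^+2+d2^+2) + 2*(tau-1/2)*(ell/4)*(d1*n1+d2*n2) + (ell/4)^+2*(n1^+2+n2^+2) by rewrite eb1 eb2; ring.
  by rewrite dn nn ss; field.
have hM : b1^+2 + b2^+2 <= (s/2 - ell/4)^+2.
  rewrite hb; exact: (@gM R tau tau0 s ell taul tauu tau0s s0 ls l0).
have ha : a1^+2 + a2^+2 < (ell/4)^+2.
  by move: hw; rewrite (_ : (ell/4)^+2 = ell^+2/16) //; field.
have r0 : 0 < ell/4 by lra.
have M0 : 0 <= s/2 - ell/4 by lra.
have hab := @core R _ _ _ _ _ _ r0 M0 ha hM.
have e4 : ell/4 + (s/2 - ell/4) = s/2 by ring.
rewrite e4 in hab.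
have ew1 : z1 - w1 = u1 - (a1 + b1) by rewrite eu1 ea1 eb1; ring.
have ew2 : z2 - w2 = u2 - (a2 + b2) by rewrite eu2 ea2 eb2; ring.
have ex1 : z1 - x1 = u1 + d1/2 by rewrite eu1; ring.
have ex2 : z2 - x2 = u2 + d2/2 by rewrite eu2; ring.
have [k0 ek0] : exists k0, k0 = -d2 * u1 + d1 * u2 by eexists.
rewrite -ek0 in sgk.
have ku1 : (d1^+2+d2^+2) * u1 = -d2 * k0.
  have : d1*(d1*u1+d2*u2) = 0 by rewrite du mulr0.
  by rewrite ek0 => h; rewrite -[LHS]subr0 -h; ring.
have ku2 : (d1^+2+d2^+2) * u2 = d1 * k0.
  have : d2*(d1*u1+d2*u2) = 0 by rewrite du mulr0.
  by rewrite ek0 => h; rewrite -[LHS]subr0 -h; ring.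
have eP : (d1^+2+d2^+2) * ((a1+b1)*u1 + (a2+b2)*u2) = k0 * (-d2*(a1+b1) + d1*(a2+b2)).
  have -> : (d1^+2+d2^+2) * ((a1+b1)*u1 + (a2+b2)*u2) = (a1+b1)*((d1^+2+d2^+2)*u1) + (a2+b2)*((d1^+2+d2^+2)*u2) by ring.
  rewrite ku1 ku2; ring.
have Bb : -d2*b1 + d1*b2 = s * (ell/4) * sg.
  have : (-d2*b1 + d1*b2) * s = (s * (ell/4) * sg) * s.
    have -> : (-d2*b1 + d1*b2) * s = (tau - 1/2) * (-d2*d1 + d1*d2) * s + ell/4 * ((-d2*n1 + d1*n2) * s) by rewrite eb1 eb2; ring.
    rewrite Bn; ring.
  exact: mulIf.
have Ba : (-d2*a1 + d1*a2)^+2 < (s * (ell/4))^+2.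
  have := @cs2 R (-d2) d1 a1 a2. rewrite sqrrN (addrC (d2^+2)) -ss => h.
  apply: (le_lt_trans h). rewrite exprMn ltr_pM2l; first exact: ha.
  by rewrite exprn_gt0.
have sBw : 0 < sg * (-d2*(a1+b1) + d1*(a2+b2)).
  have -> : sg * (-d2*(a1+b1) + d1*(a2+b2)) = sg * (-d2*a1 + d1*a2) + sg * (-d2*b1 + d1*b2) by ring.
  rewrite Bb; have -> : sg * (s * (ell / 4) * sg) = sg^+2 * (s * (ell/4)) by ring.
  rewrite sg2 mul1r; exact: gP.
have P0 : 0 <= (a1+b1)*u1 + (a2+b2)*u2.
  have : 0 <= (d1^+2+d2^+2) * ((a1+b1)*u1 + (a2+b2)*u2).
    rewrite eP; have -> : k0 * (- d2 * (a1 + b1) + d1 * (a2 + b2)) = (sg * k0) * (sg * (- d2 * (a1 + b1) + d1 * (a2 + b2))).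
      by rewrite -[LHS]mul1r -sg2; ring.
    by apply: mulr_ge0 => //; apply: ltW.
  by rewrite pmulr_rge0.
rewrite ew1 ew2 ex1 ex2.
have -> : (u1 + d1 / 2) ^+ 2 + (u2 + d2 / 2) ^+ 2 = u1^+2 + u2^+2 + (d1*u1+d2*u2) + s^+2/4 by rewrite ss; field.
rewrite du.
have -> : (u1 - (a1 + b1)) ^+ 2 + (u2 - (a2 + b2)) ^+ 2 = u1^+2 + u2^+2 - 2 * ((a1+b1)*u1 + (a2+b2)*u2) + ((a1 + b1) ^+ 2 + (a2 + b2) ^+ 2) by ring.
have : (s/2)^+2 = s^+2/4 by field.
clear -P0 hab; lra.
Qed.

Lemma npts0 (R : realType) (S : set (R*R)) : S = set0 -> npts S = 0%:E.
Proof.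
move=> ->; rewrite /npts; case: pselect => [_|/(_ (finite_set0 _))//].
by rewrite fset_set0.
Qed.

Lemma void_prob (R : realType) (d : measure_display) (Omega : measurableType d)
  (P : probability Omega R) (X : Omega -> set (R * R)) (A : set (R*R)) :
  unit_poisson_process P X -> measurable A -> bounded2 A ->
  P [set w | npts (X w `&` A) = ((0%N)%:R)%:E] = (expR (- fine (area A)))%:E.
Proof.
move=> [_ hind] mA bA.
have := hind 1%N (fun _ => A) (fun _ => 0%N) (fun _ => conj mA bA).
have -> : \bigcap_(i in [set: 'I_1]) [set w | npts (X w `&` A) = ((0%N)%:R)%:E]
   = [set w | npts (X w `&` A) = ((0%N)%:R)%:E].
  apply/seteqP; split => w; first by move/(_ ord0 I).
  by move=> h i _.
move=> ->; last by move=> i j; rewrite !ord1.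
by rewrite big_ord1 /Defs.poisson_pmf expr0 mulr1 fact0 divr1.
Qed.

Lemma area_rect (R : realType) (a b L : R) : 0 < L ->
  area ([set` `[a, a + L[] `*` [set` `[b, b + L[]) = (L * L)%:E.
Proof.
move=> L0; rewrite /area product_measure1E //.
have h1 := @lebesgue_measure_itv R `[a, a+L[.
have h2 := @lebesgue_measure_itv R `[b, b+L[.
rewrite /= in h1 h2.
rewrite [X in (X * _)%E]h1 [X in (_ * X)%E]h2.
rewrite !lte_fin !ltrDl L0 -!EFinD -EFinM. congr (_%:E). ring.
Qed.

Lemma expR_pow16 (R : realType) (x : R) : -16 <= x -> (1 + x/16)^+16 <= expR x.
Proof.
move=> hx.
have -> : expR x = expR (x/16) ^+ 16.
  by rewrite -expRM_natl; congr expR; rewrite mulrC -mulrA mulVf ?mulr1.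
apply: lerXn2r; rewrite ?nnegrE ?expR_ge0 ?expR_ge1Dx //; lra.
Qed.

Lemma sqrt32 (R : realType) : 28/5 <= Num.sqrt (32 : R).
Proof.
have h := sqr_sqrtr (ler0n R 32). have h0 := sqrtr_ge0 (32:R).
rewrite leNgt; apply/negP => h1; nra.
Qed.

Lemma trivial_bound (R : realType) (rho ell : R) : 0 < rho -> 0 < ell -> ell^+2 <= 112 ->
  1 <= (Num.sqrt 32 * rho / ell + 8)^+2 * expR (- (ell^+2/32)).
Proof.
move=> r0 l0 hl.
have h1 : 64 <= (Num.sqrt 32 * rho / ell + 8)^+2.
  have : 0 <= Num.sqrt 32 * rho / ell by apply: divr_ge0; [apply: mulr_ge0; [apply: sqrtr_ge0|lra]|lra].
  nra.
have h2 : expR (- (7/2)) <= expR (- (ell^+2/32)) by rewrite ler_expR; lra.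
have h3 : (1 + (- (7/2))/16 : R)^+16 <= expR (- (7/2)) by apply: expR_pow16; lra.
have h4 : (1/64 : R) <= (1 + (- (7/2))/16)^+16.
  have -> : (1 + (- (7/2))/16 : R) = 25/32 by field.
  have a2 : 61/100 <= (25/32 : R)^+2 by lra.
  have a4 : 37/100 <= (25/32 : R)^+4.
    have -> : (25/32:R)^+4 = ((25/32)^+2)^+2 by rewrite -exprM.
    have hh : (61/100:R)^+2 <= ((25/32:R)^+2)^+2.
      by apply: lerXn2r; rewrite ?nnegrE; lra.
    have ee : (61/100:R)^+2 = (61/100) * (61/100) by rewrite expr2.
    lra.
  have a8 : 13/100 <= (25/32 : R)^+8.
    have -> : (25/32:R)^+8 = ((25/32)^+4)^+2 by rewrite -exprM.
    have hh : (37/100:R)^+2 <= ((25/32:R)^+4)^+2.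
      by apply: lerXn2r; rewrite ?nnegrE; lra.
    have ee : (37/100:R)^+2 = (37/100) * (37/100) by rewrite expr2.
    lra.
  have a16 : 169/10000 <= (25/32 : R)^+16.
    have -> : (25/32:R)^+16 = ((25/32)^+8)^+2 by rewrite -exprM.
    have hh : (13/100:R)^+2 <= ((25/32:R)^+8)^+2.
      by apply: lerXn2r; rewrite ?nnegrE; lra.
    have ee : (13/100:R)^+2 = (13/100) * (13/100) by rewrite expr2.
    lra.
  lra.
have h5 : 0 <= expR (- (ell^+2/32)) by apply: expR_ge0.
nra.
Qed.

Lemma sqge (R : realType) (a b : R) : 0 <= a -> a <= b -> a^+2 <= b^+2.
Proof. by move=> a0 ab; apply: lerXn2r; rewrite ?nnegrE //; lra. Qed.

Lemma E36 (R : realType) (ell : R) : 112 < ell^+2 -> 36 <= expR (23 * ell^+2 / 576).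
Proof.
move=> hl.
have hx : -16 <= 23 * ell^+2 / 576 by lra.
apply: (le_trans _ (@expR_pow16 R _ hx)).
set y := 1 + _ / 16.
have y1 : 1275/1000 <= y by rewrite /y; lra.
have y2 : 1625/1000 <= y^+2.
  have := @sqge R (1275/1000) _ ltac:(lra) y1.
  have : (1275/1000 : R)^+2 = (1275/1000) * (1275/1000) by rewrite expr2.
  lra.
have y4 : 264/100 <= y^+4.
  have -> : y^+4 = (y^+2)^+2 by rewrite -exprM.
  have := @sqge R (1625/1000) _ ltac:(lra) y2.
  have : (1625/1000 : R)^+2 = (1625/1000) * (1625/1000) by rewrite expr2.
  lra.
have y8 : 696/100 <= y^+8.
  have -> : y^+8 = (y^+4)^+2 by rewrite -exprM.
  have := @sqge R (264/100) _ ltac:(lra) y4.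
  have : (264/100 : R)^+2 = (264/100) * (264/100) by rewrite expr2.
  lra.
have -> : y^+16 = (y^+8)^+2 by rewrite -exprM.
have := @sqge R (696/100) _ ltac:(lra) y8.
have : (696/100 : R)^+2 = (696/100) * (696/100) by rewrite expr2.
lra.
Qed.

Lemma big_bound (R : realType) (rho ell : R) (N : nat) : 0 < rho -> 0 < ell ->
  112 < ell^+2 -> N%:R <= 200 * rho / ell + 152 ->
  (N * N)%:R * expR (- ((ell/3) * (ell/3))) <=
  (Num.sqrt 32 * rho / ell + 8)^+2 * expR (- (ell^+2/32)).
Proof.
move=> r0 l0 hl hN.
have hE := @E36 R ell hl.
set E := expR (23 * ell^+2 / 576) in hE *.
have E0 : 0 < E by rewrite /E expR_gt0.
have ee : expR (- ((ell/3) * (ell/3))) = expR (- (ell^+2/32)) * (E^-1)^+2.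
  by rewrite /E -expRN -expRM_natl -expRD; congr expR; field.
rewrite ee natrM.
have s32 := sqrt32 R.
set K := Num.sqrt 32 * rho / ell + 8.
set q := rho / ell.
have q0 : 0 <= q by rewrite /q divr_ge0 // ltW.
have hK : K = Num.sqrt 32 * q + 8 by rewrite /K /q mulrA.
have hN' : N%:R <= 200 * q + 152 by move: hN; rewrite /q mulrA.
have NK : N%:R <= E * K.
  have h1 : 36 * (28/5) <= E * Num.sqrt 32 by nra.
  have h2 := ler_wpM2r q0 h1.
  rewrite hK; nra.
have NK2 : N%:R * E^-1 <= K.
  by rewrite ler_pdivrMr // mulrC.
have N0 : 0 <= N%:R * E^-1 :> R by rewrite mulr_ge0 // invr_ge0 ltW.
have := @sqge R _ _ N0 NK2.
have ex0 : 0 <= expR (- (ell^+2/32)) by apply: expR_ge0.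
move=> h.
have -> : N%:R * N%:R * (expR (- (ell ^+ 2 / 32)) * E^-1 ^+ 2) = (N%:R * E^-1)^+2 * expR (- (ell ^+ 2 / 32)) by ring.
by apply: ler_wpM2r.
Qed.

Lemma dist2_sq (R : realType) (a b : R * R) :
  dist2 a b ^+ 2 = (a.1 - b.1)^+2 + (a.2 - b.2)^+2.
Proof. by rewrite /dist2 sqr_sqrtr // addr_ge0 // sqr_ge0. Qed.

Lemma dist_set_le (R : realType) (V : set (R*R)) z v : V v -> dist_set z V <= dist2 z v.
Proof.
move=> Vv; rewrite /dist_set; apply: ge_inf; last by exists v.
by exists 0 => _ [u _ <-]; rewrite /dist2 sqrtr_ge0.
Qed.

Lemma event_disk (R : realType) (V : set (R*R)) (x y : R * R) (rho ell : R) :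
  0 < ell -> delaunay_edge V x y -> ell <= dist2 x y ->
  (segment x y `&` square (0, 0) rho) !=set0 ->
  exists c1 c2 : R, `|c1| <= rho + 3*ell/4 /\ `|c2| <= rho + 3*ell/4 /\
    forall v, V v -> ~ ((v.1 - c1)^+2 + (v.2 - c2)^+2 < ell^+2/16).
Proof.
move=> l0 [Vx [Vy [_ [z [_ [_ [[hx hy] _]]]]]]] hl [p [[t ht <-] [hp1 hp2]]].
have ht2 : t \in `[0, 1] := ht. move: ht2; rewrite in_itv /= => /andP[t0 t1].
rewrite /= !subr0 in hp1 hp2.
have hxy : dist2 z x = dist2 z y by rewrite hx hy.
have hz : (z.1-x.1)^+2 + (z.2-x.2)^+2 = (z.1-(x.1+(y.1-x.1)))^+2 + (z.2-(x.2+(y.2-x.2)))^+2.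
  by rewrite -!dist2_sq hxy dist2_sq; congr (_ ^+ 2 + _ ^+ 2); ring.
have hD : ell^+2 <= (y.1-x.1)^+2 + (y.2-x.2)^+2.
  have -> : (y.1-x.1)^+2 + (y.2-x.2)^+2 = dist2 x y ^+ 2.
    by rewrite dist2_sq; congr (_ + _); rewrite -sqrrN opprB.
  apply: lerXn2r => //; rewrite nnegrE; [exact: ltW | exact: sqrtr_ge0].
have [c1 [c2 [hc1 [hc2 hw]]]] := @geom R x.1 x.2 (y.1-x.1) (y.2-x.2) z.1 z.2 t rho ell l0 hD hz t0 t1 hp1 hp2.
exists c1, c2; split => //; split => // v Vv hv.
have := hw v.1 v.2 hv.
have : dist2 z x <= dist2 z v by rewrite hx; exact: dist_set_le.
rewrite /dist2 ler_sqrt; last by rewrite addr_ge0 // sqr_ge0.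
move=> h1 h2; have := lt_le_trans h2 h1; by rewrite ltxx.
Qed.

Lemma sq_lt (R : realType) (a B : R) : -B < a -> a < B -> a^+2 < B^+2.
Proof. move=> h1 h2; nra. Qed.

Theorem lemma19 (R : realType) (d : measure_display) (Omega : measurableType d)
  (P : probability Omega R) (X : Omega -> set (R * R)) (rho ell : R) :
  unit_poisson_process P X -> 0 < rho -> 0 < ell ->
  exists2 F : set Omega, measurable F &
    long_edge_event X rho ell `<=` F /\
    (P F <= (((Num.sqrt 32 * rho / ell + 8) ^+ 2) * expR (- (ell ^+ 2 / 32)))%:E)%E.
Proof.
move=> hpp r0 l0.
case: (lerP (ell^+2) 112) => hl.
  exists setT; first exact: measurableT.
  split => //; rewrite probability_setT lee_fin.
  exact: trivial_bound.
have [hmeas _] := hpp.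
set g := ell / 100. set L := ell / 3.
set a0 := -(rho + 3*ell/4) - L/2 - g.
set W := (2*rho + 3*ell/2) / g.
have g0 : 0 < g by rewrite /g; lra.
have L0 : 0 < L by rewrite /L; lra.
have W0 : 0 <= W by rewrite /W divr_ge0 //; lra.
set N := (Num.truncn W + 2)%N.
have N0 : (0 < N)%N by rewrite /N addn2.
pose cell (i j : nat) : set (R*R) :=
  [set` `[a0 + i%:R*g, a0 + i%:R*g + L[] `*` [set` `[a0 + j%:R*g, a0 + j%:R*g + L[].
pose Fk (k : nat) := [set w | npts (X w `&` cell (k %/ N)%N (k %% N)%N) = ((0%N)%:R)%:E].
have mcell i j : measurable (cell i j).
  by apply: measurableX; apply: measurable_itv.
have bcell i j : bounded2 (cell i j).
  exists (`|a0 + i%:R*g| + `|a0 + j%:R*g| + L) => u [/= hu1 hu2].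
  move: hu1 hu2; rewrite !in_itv /= => /andP[u1 u2] /andP[u3 u4].
  rewrite /square /= !subr0; split; rewrite ler_norml; apply/andP; split;
    have := ler_norm (a0 + i%:R*g); have := ler_norm (a0 + j%:R*g);
    have := normr_ge0 (a0 + i%:R*g); have := normr_ge0 (a0 + j%:R*g);
    have := ler_norm (- (a0 + i%:R*g)); have := ler_norm (- (a0 + j%:R*g));
    rewrite !normrN; lra.
have mF k : measurable (Fk k) by apply: hmeas.
exists (\big[setU/set0]_(k < N*N) Fk k).
  by apply: bigsetU_measurable => k _.
split.
  move=> w [x [y [he [hxy hs]]]].
  have [c1 [c2 [hc1 [hc2 hv]]]] := @event_disk R _ _ _ _ _ l0 he hxy hs.
  have pick c : `|c| <= rho + 3*ell/4 -> exists2 i : nat, (i < N)%N &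
      a0 + i%:R*g <= c - L/2 /\ c - L/2 < a0 + i%:R*g + g.
    move=> hc; move: hc; rewrite ler_norml => /andP[hc1' hc2'].
    have [v ev] : exists v, v = (c - L/2 - a0)/g by eexists.
    have vg : v * g = c - L/2 - a0 by rewrite ev; field; rewrite gt_eqF.
    have v0 : 0 <= v by rewrite ev divr_ge0 // ?ltW //; rewrite /a0; lra.
    have vW : v <= W + 1.
      have : v * g <= (W + 1) * g.
        have eW : (W + 1) * g = 2*rho + 3*ell/2 + g by rewrite /W; field; rewrite gt_eqF.
        rewrite vg eW /a0; lra.
      by rewrite ler_pM2r.
    have hWt := real_truncnS_gt (num_real W).
    exists (Num.truncn v).
      rewrite truncn_lt_nat // /N natrD.
      move: hWt; rewrite -addn1 natrD; lra.
    have [h1 h2] : (Num.truncn v)%:R <= v /\ v < (Num.truncn v).+1%:R.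
      by move: (truncn_itv v0) => /andP[].
    move: h2; rewrite -addn1 natrD => h2.
    have h1' := ler_wpM2r (ltW g0) h1.
    have h2' : v * g < ((Num.truncn v)%:R + 1) * g by rewrite ltr_pM2r.
    rewrite mulrDl mul1r in h2'.
    split; lra.
  have [i iN [hi1 hi2]] := pick c1 hc1.
  have [j jN [hj1 hj2]] := pick c2 hc2.
  rewrite -bigcup_mkord; exists (i*N + j)%N; first by rewrite /=; nia.
  change (npts (X w `&` cell ((i*N+j) %/ N)%N ((i*N+j) %% N)%N) = ((0%N)%:R)%:E).
  rewrite (divnMDl _ _ N0) (divn_small jN) addn0 modnMDl (modn_small jN).
  apply: npts0; apply/seteqP; split => // u [Xu [hu1 hu2]].
  apply: (hv u Xu).
  have hu1' : u.1 \in `[a0 + i%:R * g, a0 + i%:R * g + L[ := hu1.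
  have hu2' : u.2 \in `[a0 + j%:R * g, a0 + j%:R * g + L[ := hu2.
  move: hu1' hu2'; rewrite !in_itv /= => /andP[u1 u2] /andP[u3 u4].
  have s1 : (u.1 - c1)^+2 < (L/2 + g)^+2 by apply: sq_lt; lra.
  have s2 : (u.2 - c2)^+2 < (L/2 + g)^+2 by apply: sq_lt; lra.
  have e : (L/2 + g)^+2 = ell^+2 * ((53/300)^+2) by rewrite /L /g; field.
  have k : 2 * ((53/300)^+2) < (1/16 : R) by rewrite expr2; lra.
  have l2 : 0 < ell^+2 by rewrite exprn_gt0.
  move: ((53/300)^+2) e k => cc e k.
  rewrite e in s1 s2.
  have : 2 * (ell^+2 * cc) < ell^+2 / 16 by nra.
  lra.
have mU : measurable (\big[setU/set0]_(k < N*N) Fk k) by apply: bigsetU_measurable => k _.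
have sub := @content_subadditive _ _ _ P (\big[setU/set0]_(k < N*N) Fk k) Fk (N*N)%N
  (fun k _ => mF k) mU (fun x h => h).
apply: (le_trans sub).
rewrite (eq_bigr (fun _ => (expR (-(L*L)))%:E)); last first.
  move=> k _.
  have h := @void_prob R d Omega P X (cell (k %/ N)%N (k %% N)%N) hpp (mcell _ _) (bcell _ _).
  apply: (etrans h); rewrite /cell area_rect //.
rewrite sumEFin sumr_const card_ord lee_fin -[X in X <= _]mulr_natl.
apply: (@big_bound R rho ell N r0 l0 hl).
have hWt : (Num.truncn W)%:R <= W by rewrite truncn_le.
have eW : W = 200 * rho / ell + 150 by rewrite /W /g; field; rewrite gt_eqF.
rewrite /N natrD; lra.
Qed.
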